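(* Let $(N,+,* )$ be a nilpotent ring with adjoint operation $x\circ y=x+y+x*y$, let $S$ be a subring and $I$ a two-sided ideal of $N$ with $S\cap I=\{0\}$ and $N=S+I$. Then every $x\in N$ can be written uniquely as $x=s\circ i$ with $s\in S$, $i\in I$; define $x\bullet y=s\circ y\circ i$, so that $(N,+,\bullet)$ is a left brace, and let $r$ be its Yang–Baxter map. Let $X\subseteq N$ be such that $(X,r)$ is a solution of the set-theoretic Yang–Baxter equation, and let $J\subseteq I\cap X$ be a two-sided ideal of the ring $N$. Let $g:X\to X$ satisfy, for every $x\in X$: $g(x)*z=z*g(x)$ for all $z\in I$; $g(x+j)=g(x)$ whenever $j\in J$ and $x+j\in X$; $g(x)\in J$; and $g(x)\circ g(x)=0$. Suppose $k(x)=x+x*g(x)$ satisfies $k(X)\subseteq X$. Then $k$ is a reflection of $(X,r)$ and $k\circ k=\mathrm{id}_X$.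
   Context: A (left) brace is a triple $(B,+,\circ)$ with $(B,+)$ abelian group, $(B,\circ)$ group, and $x\circ(y+z)=x\circ y+x\circ z-x$. The Yang–Baxter map of the brace $(N,+,\bullet)$ is $r(x,y)=(\sigma_x(y),\tau_y(x))$ with $\sigma_x(y)=x\bullet y-x$ and $\tau_y(x)=(\sigma_x(y))^{-1}\bullet x-(\sigma_x(y))^{-1}$, inverses taken in $(N,\bullet)$. For $X\subseteq N$, $(X,r)$ is a solution of the set-theoretic Yang–Baxter equation if $r(X\times X)\subseteq X\times X$ and $(\mathrm{id}\times r)(r\times\mathrm{id})(\mathrm{id}\times r)=(r\times\mathrm{id})(\mathrm{id}\times r)(r\times\mathrm{id})$ on $X^3$. A map $k:X\to X$ is a reflection of $(X,r)$ if $r(\mathrm{id}\times k)r(\mathrm{id}\times k)=(\mathrm{id}\times k)r(\mathrm{id}\times k)r$ on $X\times X$. *)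

(* Defs.v *)
(* (N,+) is a zmodType; the (non-unital) multiplication is an
   explicit operation, since MathComp rings are unital and a nilpotent ring is not. *)
From mathcomp Require Import all_boot all_order all_algebra.
From Stdlib Require Import ClassicalEpsilon.
Set Implicit Arguments. Unset Strict Implicit. Unset Printing Implicit Defensive.
Import GRing.Theory.
Local Open Scope ring_scope.

Section Defs.
Variable N : zmodType.
Variable mul : N -> N -> N.

Definition is_nilpotent_ring : Prop :=
  [/\ forall x y z, mul x (mul y z) = mul (mul x y) z,
      forall x y z, mul x (y + z) = mul x y + mul x z,
      forall x y z, mul (x + y) z = mul x z + mul y z &
      exists n : nat, forall (x : N) (s : seq N), size s = n -> foldl mul x s = 0].

Definition adj (x y : N) : N := x + y + mul x y.

Definition is_subring (S : N -> Prop) : Prop :=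
  [/\ S 0, forall x y, S x -> S y -> S (x - y) & forall x y, S x -> S y -> S (mul x y)].

Definition is_ideal (I : N -> Prop) : Prop :=
  [/\ I 0, forall x y, I x -> I y -> I (x - y),
      forall x y, I y -> I (mul x y) & forall x y, I x -> I (mul x y)].

Variables S I : N -> Prop.

(* a chosen decomposition x = s o i with s in S, i in I (unique under the
   hypotheses of the theorem) *)
Definition decomp (x : N) : N * N :=
  epsilon (inhabits (0, 0)) (fun p => S p.1 /\ I p.2 /\ x = adj p.1 p.2).

Definition bullet (x y : N) : N := adj (adj (decomp x).1 y) (decomp x).2.

Definition binv (x : N) : N :=
  epsilon (inhabits 0) (fun y => bullet x y = 0 /\ bullet y x = 0).

Definition sigma (x y : N) : N := bullet x y - x.
Definition tau (y x : N) : N := bullet (binv (sigma x y)) x - binv (sigma x y).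

Definition ybr (p : N * N) : N * N := (sigma p.1 p.2, tau p.2 p.1).
End Defs.

Definition is_left_brace (B : zmodType) (op : B -> B -> B) : Prop :=
  [/\ forall x y z, op x (op y z) = op (op x y) z,
      exists e, (forall x, op e x = x /\ op x e = x) /\
                (forall x, exists y, op x y = e /\ op y x = e) &
      forall x y z, op x (y + z) = op x y + op x z - x].

Definition r12 (T : Type) (r : T * T -> T * T) (t : T * T * T) : T * T * T :=
  let '(x, y, z) := t in let '(a, b) := r (x, y) in (a, b, z).
Definition r23 (T : Type) (r : T * T -> T * T) (t : T * T * T) : T * T * T :=
  let '(x, y, z) := t in let '(b, c) := r (y, z) in (x, b, c).

Definition is_YB_solution (T : Type) (X : T -> Prop) (r : T * T -> T * T) : Prop :=
  (forall x y, X x -> X y -> X (r (x, y)).1 /\ X (r (x, y)).2) /\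
  (forall x y z, X x -> X y -> X z ->
     r23 r (r12 r (r23 r (x, y, z))) = r12 r (r23 r (r12 r (x, y, z)))).

Definition is_reflection (T : Type) (X : T -> Prop) (r : T * T -> T * T) (k : T -> T) : Prop :=
  let idk := fun p : T * T => (p.1, k p.2) in
  forall x y, X x -> X y ->
    r (idk (r (idk (x, y)))) = idk (r (idk (r (x, y)))).

(* Main.v *)
Require Import Defs.
From mathcomp Require Import all_boot all_order all_algebra.
Import GRing.Theory.
Local Open Scope ring_scope.
From Stdlib Require Import ClassicalEpsilon.

Lemma zc_end (N : zmodType) (x : N) : x + 0 = 0 -> x = 0.
Proof. by rewrite addr0. Qed.

Ltac zcanc :=
  match goal with
  | |- 0 + _ = 0 => rewrite add0r
  | |- (- ?t) + _ = 0 => do 40? rewrite (addrCA _ t); first [rewrite addKr | rewrite addNKr]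
  | |- ?t + _ = 0 => do 40? rewrite (addrCA _ (- t)); first [rewrite addKr | rewrite addNKr]
  end.

Ltac zsolve :=
  apply/eqP; rewrite -subr_eq0; apply/eqP;
  rewrite ?opprD ?opprB ?opprK ?addr0 ?add0r ?oppr0 ?subr0 ?sub0r;
  apply: zc_end; rewrite -?addrA;
  repeat zcanc; reflexivity.

Section Ring.
Variable N : zmodType.
Variable mul : N -> N -> N.
Hypothesis mulA : forall x y z, mul x (mul y z) = mul (mul x y) z.
Hypothesis mulDr : forall x y z, mul x (y + z) = mul x y + mul x z.
Hypothesis mulDl : forall x y z, mul (x + y) z = mul x z + mul y z.
Hypothesis nilp : exists n : nat, forall (x : N) (s : seq N), size s = n -> foldl mul x s = 0.

Lemma mulr0 x : mul x 0 = 0.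
Proof. have h := mulDr x 0 0; rewrite addr0 in h. by apply: (@addrI _ (mul x 0)); rewrite -h addr0. Qed.
Lemma mul0r x : mul 0 x = 0.
Proof. have h := mulDl 0 0 x; rewrite addr0 in h. by apply: (@addrI _ (mul 0 x)); rewrite -h addr0. Qed.
Lemma mulrN x y : mul x (- y) = - mul x y.
Proof. by apply/eqP; rewrite -addr_eq0 -mulDr addNr mulr0. Qed.
Lemma mulNr x y : mul (- x) y = - mul x y.
Proof. by apply/eqP; rewrite -addr_eq0 -mulDl addNr mul0r. Qed.
Lemma mulrB x y z : mul x (y - z) = mul x y - mul x z.
Proof. by rewrite mulDr mulrN. Qed.
Lemma mulBr x y z : mul (x - y) z = mul x z - mul y z.
Proof. by rewrite mulDl mulNr. Qed.

Local Notation adj := (adj mul).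

Ltac expand := rewrite /Defs.adj ?mulDr ?mulDl ?mulrB ?mulBr ?mulrN ?mulNr ?mul0r ?mulr0 ?mulA.

Lemma adjA x y z : adj (adj x y) z = adj x (adj y z).
Proof. expand; zsolve. Qed.
Lemma adj0r x : adj 0 x = x.
Proof. by expand; rewrite add0r addr0. Qed.
Lemma adjr0 x : adj x 0 = x.
Proof. by expand; rewrite !addr0. Qed.

Fixpoint iv (x : N) (m : nat) : N := if m is m'.+1 then - x - mul x (iv x m') else 0.

Lemma foldl_mul a b s : foldl mul (mul a b) s = mul a (foldl mul b s).
Proof. elim: s b => [|c s IH] b //=; by rewrite -mulA IH. Qed.

Lemma iv_diff x m : iv x m.+1 - iv x m = foldl mul x (nseq m x) \/
                    iv x m.+1 - iv x m = - foldl mul x (nseq m x).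
Proof.
elim: m => [|m IH]; first by right; rewrite /= mulr0 !subr0.
have -> : iv x m.+2 - iv x m.+1 = - mul x (iv x m.+1 - iv x m).
  rewrite /= !mulrB !mulrN !mulA; zsolve.
have -> : foldl mul x (nseq m.+1 x) = mul x (foldl mul x (nseq m x)) by rewrite /= foldl_mul.
by case: IH => ->; [right | left; rewrite mulrN opprK].
Qed.

Lemma adj_iv x m : adj x (iv x m) = iv x m - iv x m.+1.
Proof. rewrite /Defs.adj /=; zsolve. Qed.

Lemma rinv_ex x : exists y, adj x y = 0 /\
  forall P : N -> Prop, P 0 -> (forall a b, P a -> P b -> P (a - b)) ->
     (forall a b, P a -> P b -> P (mul a b)) -> P x -> P y.
Proof.
case: nilp => n Hn; exists (iv x n); split.
  rewrite adj_iv; apply/eqP; rewrite -opprB oppr_eq0; apply/eqP.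
  by case: (iv_diff x n) => ->; rewrite Hn ?size_nseq ?oppr0.
move=> P P0 PB PM Px; elim: n {Hn} => [|n IH] //=.
by apply: (PB); [rewrite -sub0r; apply: (PB) | apply: (PM)].
Qed.
Lemma linv x y : adj x y = 0 -> adj y x = 0.
Proof.
move=> h; have [z [hz _]] := rinv_ex y.
suff -> : x = z by [].
by rewrite -[x]adjr0 -hz -adjA h adj0r.
Qed.

Lemma adjI a b c : adj a b = adj a c -> b = c.
Proof.
move=> h; have [a' [ha' _]] := rinv_ex a; have ha := linv _ _ ha'.
by rewrite -[b]adj0r -ha adjA h -adjA ha adj0r.
Qed.


Lemma eq_via {A B C D : N} : C = D -> A - B = C - D -> A = B.
Proof. by move=> -> /eqP; rewrite subrr subr_eq0 => /eqP. Qed.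

Section Closure.
Variable P : N -> Prop.
Hypothesis P0 : P 0.
Hypothesis PB : forall a b, P a -> P b -> P (a - b).
Lemma clN a : P a -> P (- a). Proof. by move=> h; rewrite -sub0r; apply: PB. Qed.
Lemma clD a b : P a -> P b -> P (a + b).
Proof. by move=> ha hb; rewrite -[b]opprK; apply: PB => //; apply: clN. Qed.
End Closure.

Variables S I : N -> Prop.
Hypothesis HS : is_subring mul S.
Hypothesis HI : is_ideal mul I.
Hypothesis HSI : forall x, S x -> I x -> x = 0.
Hypothesis HSplusI : forall x, exists s i, S s /\ I i /\ x = s + i.

Lemma S0 : S 0. Proof. by case: HS. Qed.
Lemma SB a b : S a -> S b -> S (a - b). Proof. by case: HS => _ h _; apply: h. Qed.
Lemma SM a b : S a -> S b -> S (mul a b). Proof. by case: HS => _ _ h; apply: h. Qed.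
Lemma SD a b : S a -> S b -> S (a + b). Proof. apply: clD; [exact: S0 | exact: SB]. Qed.
Lemma Sadj a b : S a -> S b -> S (adj a b).
Proof. by move=> ha hb; rewrite /Defs.adj; do 2?apply: SD => //; apply: SM. Qed.
Lemma I0 : I 0. Proof. by case: HI. Qed.
Lemma IB a b : I a -> I b -> I (a - b). Proof. by case: HI => _ h _ _; apply: h. Qed.
Lemma IMl a b : I b -> I (mul a b). Proof. by case: HI => _ _ h _; apply: h. Qed.
Lemma IMr a b : I a -> I (mul a b). Proof. by case: HI => _ _ _ h; apply: h. Qed.
Lemma ID a b : I a -> I b -> I (a + b). Proof. apply: clD; [exact: I0 | exact: IB]. Qed.
Lemma Iadj a b : I a -> I b -> I (adj a b).
Proof. by move=> ha hb; rewrite /Defs.adj; do 2?apply: ID => //; apply: IMl. Qed.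

Definition dec x s i := S s /\ I i /\ x = adj s i.

Lemma dec_uniq {x s i s2 i2} : dec x s i -> dec x s2 i2 -> s = s2 /\ i = i2.
Proof.
move=> [Ss [Ii ex]] [Ss2 [Ii2 ex2]].
have h : adj s i = adj s2 i2 by rewrite -ex -ex2.
have e : s - s2 = i2 + mul s2 i2 - (i + mul s i).
  by apply: (eq_via h); rewrite /Defs.adj; zsolve.
have e0 : s - s2 = 0.
  apply: HSI; first exact: SB.
  by rewrite e; apply: IB; apply: ID => //; apply: IMl.
have ess : s = s2 by apply/eqP; rewrite -subr_eq0 e0.
split => //; apply: (adjI s); by rewrite h ess.
Qed.

Lemma dec_ex x : exists s i, dec x s i.
Proof.
have [s [i0 [Ss [Ii0 ->]]]] := HSplusI x.
have [s' [hs' _]] := rinv_ex s.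
exists s, (i0 + mul s' i0); split => //; split.
  by apply: ID => //; apply: IMl.
apply: (eq_via (esym (congr1 (fun t => mul t i0) hs'))) => /=; expand; zsolve.
Qed.

Local Notation decomp := (decomp mul S I).
Local Notation bullet := (bullet mul S I).
Local Notation binv := (binv mul S I).

Lemma decomp_spec x : dec x (decomp x).1 (decomp x).2.
Proof.
rewrite /Defs.decomp; apply: (epsilon_spec (inhabits (0,0))
  (fun p => S p.1 /\ I p.2 /\ x = adj p.1 p.2)).
by have [s [i h]] := dec_ex x; exists (s, i).
Qed.

Lemma decompE {x s i} : dec x s i -> decomp x = (s, i).
Proof.
move=> h; have [e1 e2] := dec_uniq (decomp_spec x) h.
by case: (decomp x) e1 e2 => a b /= -> ->.
Qed.

Lemma bulletE {x s i} y : dec x s i -> bullet x y = adj (adj s y) i.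
Proof. by move=> h; rewrite /Defs.bullet (decompE h). Qed.

Lemma dec_adj {s i} : S s -> I i -> dec (adj s i) s i.
Proof. by move=> hs hi; split. Qed.

Lemma bulletA x y z : bullet x (bullet y z) = bullet (bullet x y) z.
Proof.
have [s [i hx]] := dec_ex x; have [t [j hy]] := dec_ex y.
rewrite (bulletE _ hx) (bulletE _ hy) (bulletE _ hx).
case: hx => Ss [Ii _]; case: hy => St [Ij ey]; rewrite ey.
have hxy : dec (adj (adj s (adj t j)) i) (adj s t) (adj j i).
  split; first exact: Sadj. split; first exact: Iadj. by rewrite !adjA.
by rewrite (bulletE _ hxy) !adjA.
Qed.

Lemma bullet0l y : bullet 0 y = y.
Proof.
have h : dec 0 0 0 by split; [exact: S0 | split; [exact: I0 | by rewrite adjr0]].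
by rewrite (bulletE _ h) adj0r adjr0.
Qed.

Lemma bulletr0 x : bullet x 0 = x.
Proof. have [s [i hx]] := dec_ex x. by rewrite (bulletE _ hx) adjr0; case: hx => _ [_ ->]. Qed.

Lemma bulletD x y z : bullet x (y + z) = bullet x y + bullet x z - x.
Proof.
have [s [i hx]] := dec_ex x; rewrite !(bulletE _ hx); case: hx => _ [_ ->].
expand; zsolve.
Qed.

Lemma bulletB x y z : bullet x (y - z) = bullet x y - bullet x z + x.
Proof.
have := bulletD x (y - z) z; rewrite subrK => ->; zsolve.
Qed.

Lemma bullet_inv_ex x : exists y, bullet x y = 0 /\ bullet y x = 0.
Proof.
have [s [i hx]] := dec_ex x; have [Ss [Ii ex]] := hx.
have [s' [hs' Ps']] := rinv_ex s; have [i' [hi' Pi']] := rinv_ex i.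
have Ss' : S s' by apply: Ps' => //; [exact: S0 | exact: SB | exact: SM].
have Ii' : I i' by apply: Pi' => //; [exact: I0 | exact: IB | move=> a b _; exact: IMl].
exists (adj s' i'); rewrite (bulletE _ hx) (bulletE _ (dec_adj Ss' Ii')) ex; split.
  by rewrite -adjA hs' adj0r; apply: linv.
by rewrite -(adjA s') (linv _ _ hs') adj0r hi'.
Qed.

Lemma binvP x : bullet x (binv x) = 0 /\ bullet (binv x) x = 0.
Proof.
rewrite /Defs.binv; apply: (epsilon_spec (inhabits 0)
  (fun y => bullet x y = 0 /\ bullet y x = 0)); exact: bullet_inv_ex.
Qed.

Lemma binv_uniq a y : bullet a y = 0 -> y = binv a.
Proof.
move=> h; have [_ h2] := binvP a.
by rewrite -[y]bullet0l -h2 -bulletA h bulletr0.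
Qed.

Definition lam a y := bullet a y - a.

Lemma lamM a b y : lam (bullet a b) y = lam a (lam b y).
Proof. rewrite /lam bulletB bulletA; zsolve. Qed.
Lemma lam0 y : lam 0 y = y.
Proof. by rewrite /lam bullet0l subr0. Qed.
Lemma lamD a y z : lam a (y + z) = lam a y + lam a z.
Proof. rewrite /lam bulletD; zsolve. Qed.
Lemma lamB a y z : lam a (y - z) = lam a y - lam a z.
Proof. rewrite /lam bulletB; zsolve. Qed.
Lemma lam_invr c y : lam c (lam (binv c) y) = y.
Proof. by rewrite -lamM (binvP c).1 lam0. Qed.
Lemma lam_invl c y : lam (binv c) (lam c y) = y.
Proof. by rewrite -lamM (binvP c).2 lam0. Qed.

Lemma bulletI h y : I h -> bullet h y = adj y h.
Proof.
move=> hh; have hd : dec h 0 h by split; [exact: S0 | split; [done | by rewrite adj0r]].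
by rewrite (bulletE _ hd) adj0r.
Qed.

Lemma bullet_central h u : I h -> (forall z, I z -> mul h z = mul z h) ->
  bullet u h = adj u h.
Proof.
move=> hh hc; have [s [i hu]] := dec_ex u; rewrite (bulletE _ hu).
case: hu => _ [Ii ->]; rewrite !adjA; congr (adj s _).
rewrite /Defs.adj hc //; zsolve.
Qed.

Lemma lam_comm h c y : I h -> (forall z, I z -> mul h z = mul z h) ->
  lam h (lam c y) = lam c (lam h y).
Proof.
move=> hh hc; rewrite -!lamM; congr (lam _ y).
by rewrite bulletI // bullet_central.
Qed.

Lemma lamI h y : I h -> lam h y = y + mul y h.
Proof. move=> hh; rewrite /lam bulletI // /Defs.adj; zsolve. Qed.


Variable J : N -> Prop.
Hypothesis HJ : is_ideal mul J.
Hypothesis HJI : forall j, J j -> I j.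

Lemma J0 : J 0. Proof. by case: HJ. Qed.
Lemma JB a b : J a -> J b -> J (a - b). Proof. by case: HJ => _ h _ _; apply: h. Qed.
Lemma JMl a b : J b -> J (mul a b). Proof. by case: HJ => _ _ h _; apply: h. Qed.
Lemma JMr a b : J a -> J (mul a b). Proof. by case: HJ => _ _ _ h; apply: h. Qed.
Lemma JD a b : J a -> J b -> J (a + b). Proof. apply: clD; [exact: J0 | exact: JB]. Qed.

Lemma lamJ c j : J j -> J (lam c j).
Proof.
move=> hj; have [s [i hc]] := dec_ex c; rewrite /lam (bulletE _ hc); case: hc => _ [_ ->].
have -> : adj (adj s j) i - adj s i = j + mul s j + mul j i + mul (mul s j) i.
  expand; zsolve.
by apply: JD; [apply: JD; [apply: JD; [done | exact: JMl] | exact: JMr] | apply: JMr; exact: JMl].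
Qed.

Lemma lam_sum c j : c + j = bullet c (lam (binv c) j).
Proof.
rewrite /lam bulletB bulletA (binvP c).1 bullet0l subr0; zsolve.
Qed.

Lemma F3 c j y : J j -> J (lam (c + j) y - lam c y).
Proof.
move=> hj; have hj'' := lamJ (binv c) j hj.
rewrite (lam_sum c j) lamM (lamI _ _ (HJI _ hj'')) lamD.
have -> : lam c y + lam c (mul y (lam (binv c) j)) - lam c y
          = lam c (mul y (lam (binv c) j)) by zsolve.
by apply: lamJ; apply: JMl.
Qed.

Lemma F4 c j : J j -> J (binv (c + j) - binv c).
Proof.
move=> hj; have hj'' := lamJ (binv c) j hj.
have [w [hw Pw]] := rinv_ex (lam (binv c) j).
have Jw : J w.
  by apply: Pw => //; [exact: J0 | exact: JB | move=> a b _; exact: JMl].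
have e : binv (c + j) = bullet w (binv c).
  symmetry; apply: binv_uniq; rewrite (lam_sum c j).
  rewrite bulletA -(bulletA c) (bulletI _ _ (HJI _ hj'')) (linv _ _ hw) bulletr0.
  exact: (binvP c).1.
rewrite e bulletI; last exact: HJI.
have -> : adj (binv c) w - binv c = w + mul (binv c) w by rewrite /Defs.adj; zsolve.
by apply: JD => //; apply: JMl.
Qed.

Lemma Jlam_binv c c' y : J (c' - c) -> J (lam (binv c') y - lam (binv c) y).
Proof.
move=> hj; have e : c + (c' - c) = c' by zsolve.
have h1 := F4 c _ hj; rewrite e in h1.
have e2 : binv c + (binv c' - binv c) = binv c' by zsolve.
by have := F3 (binv c) _ y h1; rewrite e2.
Qed.

Lemma main_sec (X : N -> Prop) (g : N -> N)
  (HX : is_YB_solution X (ybr mul S I))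
  (Hg1 : forall x, X x -> forall z, I z -> mul (g x) z = mul z (g x))
  (Hg2 : forall x j, X x -> J j -> X (x + j) -> g (x + j) = g x)
  (Hg3 : forall x, X x -> J (g x))
  (Hg4 : forall x, X x -> adj (g x) (g x) = 0)
  (HkX : forall x, X x -> X (x + mul x (g x))) :
  is_reflection X (ybr mul S I) (fun x => x + mul x (g x)) /\
  (forall x, X x ->
     let k := fun y => y + mul y (g y) in k (k x) = x).
Proof.
set k := fun y => y + mul y (g y).
have kE z : X z -> k z = lam (g z) z.
  by move=> Xz; rewrite lamI //; apply: HJI; apply: Hg3.
have gsub z j : X z -> X j -> J (j - z) -> g j = g z.
  move=> Xz Xj hj; have e : z + (j - z) = j by zsolve.
  by have := Hg2 z (j - z) Xz hj; rewrite e => ->.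
have XI z : X z -> I (g z) by move=> Xz; apply: HJI; apply: Hg3.
have XP a b : X a -> X b -> X (lam a b) /\ X (lam (binv (lam a b)) a).
  by move=> Xa Xb; have := HX.1 a b Xa Xb.
split; last first.
  move=> x Xx /=; rewrite -/k.
  have e : g (k x) = g x by apply: Hg2 => //; [apply: JMl; apply: Hg3 | apply: HkX].
  rewrite /k -/(k x) e /k.
  apply: (eq_via (congr1 (mul x) (Hg4 _ Xx))); rewrite mulr0; expand; zsolve.
move=> x y Xx Xy /=.
rewrite /ybr /tau /sigma /= -!/(lam _ _) -/k.
have Xky : X (k y) by apply: HkX.
set u1 := lam x (k y); set v1 := lam (binv u1) x.
set u := lam x y; set v := lam (binv u) x.
have [Xu1 Xv1] := XP _ _ Xx Xky.
have [Xu Xv] := XP _ _ Xx Xy.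
have Xkv : X (k v) by apply: HkX.
set a := lam u (k v); set b := lam (binv a) u.
have [Xa Xb] := XP _ _ Xu Xkv.
have cl1 : lam u1 (k v1) = lam (g v1) x.
  by rewrite (kE _ Xv1) -(lam_comm _ _ _ (XI _ Xv1) (Hg1 _ Xv1)) /v1 lam_invr.
have cl2 : a = lam (g v) x.
  by rewrite /a (kE _ Xv) -(lam_comm _ _ _ (XI _ Xv) (Hg1 _ Xv)) /v lam_invr.
have cl3 : g v1 = g v.
  apply: gsub => //; rewrite /v1 /v; apply: Jlam_binv.
  rewrite /u1 /u (kE _ Xy) -lamB; apply: lamJ.
  rewrite (lamI _ _ (XI _ Xy)); have -> : y + mul y (g y) - y = mul y (g y) by zsolve.
  by apply: JMl; apply: Hg3.
have cl4 : g b = g y.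
  apply: gsub => //; have -> : b - y = lam (binv a) u - lam (binv x) u by rewrite /u lam_invl.
  apply: Jlam_binv.
  rewrite cl2 (lamI _ _ (XI _ Xv)); have -> : x + mul x (g v) - x = mul x (g v) by zsolve.
  by apply: JMl; apply: Hg3.
have e1 : lam u1 (k v1) = a by rewrite cl1 cl3 cl2.
rewrite e1; congr pair.
rewrite (kE _ Xb) cl4 /b (lam_comm _ _ _ (XI _ Xy) (Hg1 _ Xy)).
congr lam; by rewrite /u1 (kE _ Xy) /u (lam_comm _ _ _ (XI _ Xy) (Hg1 _ Xy)).
Qed.


Lemma final_sec (X : N -> Prop) (g : N -> N)
  (HX : is_YB_solution X (ybr mul S I))
  (Hg1 : forall x, X x -> forall z, I z -> mul (g x) z = mul z (g x))
  (Hg2 : forall x j, X x -> J j -> X (x + j) -> g (x + j) = g x)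
  (Hg3 : forall x, X x -> J (g x))
  (Hg4 : forall x, X x -> adj (g x) (g x) = 0)
  (HkX : forall x, X x -> X (x + mul x (g x))) :
  (forall x, exists! p : N * N, S p.1 /\ I p.2 /\ x = adj p.1 p.2) /\
  is_left_brace bullet /\
  is_reflection X (ybr mul S I) (fun x => x + mul x (g x)) /\
  (forall x, X x ->
     let k := fun y => y + mul y (g y) in k (k x) = x).
Proof using mulA mulDr mulDl nilp HS HI HSI HSplusI HJ HJI.
split.
  move=> x; have [s [i h]] := dec_ex x; exists (s, i); split; first exact: h.
  by case=> s2 i2 h2; have [-> ->] := dec_uniq h h2.
split; last exact: main_sec.
split.
- exact: bulletA.
- exists 0; split; first by move=> x; rewrite bullet0l bulletr0.
  exact: bullet_inv_ex.
- exact: bulletD.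
Qed.

End Ring.


Theorem mainTheorem12 (N : zmodType) (mul : N -> N -> N)
  (S I X J : N -> Prop) (g : N -> N)
  (HN : is_nilpotent_ring mul)
  (HS : is_subring mul S) (HI : is_ideal mul I)
  (HSI : forall x, S x -> I x -> x = 0)
  (HSplusI : forall x, exists s i, S s /\ I i /\ x = s + i)
  (HX : is_YB_solution X (ybr mul S I))
  (HJ : is_ideal mul J) (HJIX : forall j, J j -> I j /\ X j)
  (HgX : forall x, X x -> X (g x))
  (Hg1 : forall x, X x -> forall z, I z -> mul (g x) z = mul z (g x))
  (Hg2 : forall x j, X x -> J j -> X (x + j) -> g (x + j) = g x)
  (Hg3 : forall x, X x -> J (g x))
  (Hg4 : forall x, X x -> adj mul (g x) (g x) = 0)
  (HkX : forall x, X x -> X (x + mul x (g x))) :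
  (forall x, exists! p : N * N, S p.1 /\ I p.2 /\ x = adj mul p.1 p.2) /\
  is_left_brace (bullet mul S I) /\
  is_reflection X (ybr mul S I) (fun x => x + mul x (g x)) /\
  (forall x, X x ->
     let k := fun y => y + mul y (g y) in k (k x) = x).
Proof.
case: HN => mA mDr mDl nil.
have := (@final_sec N mul mA mDr mDl nil S I HS HI HSI HSplusI J HJ (fun j h => (HJIX j h).1) X g
          HX Hg1 Hg2 Hg3 Hg4 HkX). move=> H; exact: H.
Qed.
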